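(* There is an absolute constant $C_2>0$ such that for all $0<u,\tau<1$ the following holds. Let $X,Y$ be finite sets, $Z\subset X\times Y$, and let $\mathsf P_X,\mathsf P_Y$ be partitions of $X$ and $Y$. Let $$E=\Big\{(p_x,p_y)\in\mathsf P_X\times\mathsf P_Y\,:\,\big\|Z-\mathbb P(Z\,:\,p_x\times p_y)\big\|_{\Box^{x,y}(p_x\times p_y)}\ge u\Big\},$$ and suppose $\mathbb P\big(\bigcup_{(p_x,p_y)\in E}p_x\times p_y\,:\,X\times Y\big)\ge\tau$. Then there are partitions $\mathsf P'_X$ of $X$ and $\mathsf P'_Y$ of $Y$ such that (i) $\mathsf P'_X\times\mathsf P'_Y$ refines $\mathsf P_X\times\mathsf P_Y$ and $\mathbb E\big[\mathbb E(Z:\mathsf P'_X\times\mathsf P'_Y)^2\big]\ge\mathbb E\big[\mathbb E(Z:\mathsf P_X\times\mathsf P_Y)^2\big]+\tau u^{C_2}$; (ii) $\operatorname{multi}(\mathsf P'_X:\mathsf P_X)\le 2^{\#\mathsf P_Y}$ and $\operatorname{multi}(\mathsf P'_Y:\mathsf P_Y)\le 2^{\#\mathsf P_X}$.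
   Context: Sets are identified with indicator functions; $X\times Y$ carries the uniform probability measure, and $\mathbb P(Z:p_x\times p_y)=|Z\cap(p_x\times p_y)|/(|p_x||p_y|)$. For finite sets $P,Q$ and $f:P\times Q\to\mathbb R$, $\|f\|_{\Box^{x,y}(P\times Q)}^4=\mathbb E_{x,x'\in P,\,y,y'\in Q}f(x,y)f(x,y')f(x',y)f(x',y')$; here $Z$ is restricted to $p_x\times p_y$. For a partition $\mathsf P$ of $X\times Y$, $\mathbb E(Z:\mathsf P)=\sum_{p\in\mathsf P}\mathbf 1_p\,|Z\cap p|/|p|$, and $\mathsf P'_X\times\mathsf P'_Y=\{a\times b:a\in\mathsf P'_X,b\in\mathsf P'_Y\}$. A partition $\mathsf P'$ refines $\mathsf P$ if every atom of $\mathsf P$ is a union of atoms of $\mathsf P'$. For a partition $\mathsf P'$ subordinate to $\mathsf P$ (every atom of $\mathsf P'$ lies in an atom of $\mathsf P$), $\operatorname{multi}(\mathsf P':\mathsf P)=\max_{p\in\mathsf P}\#\{p'\in\mathsf P':p'\subset p\}$. *)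

(* Defs.v *)
From HB Require Import structures.
From mathcomp Require Import all_boot all_order all_algebra.
From mathcomp Require Import reals exp Rstruct.
Set Implicit Arguments. Unset Strict Implicit. Unset Printing Implicit Defensive.
Import Order.TTheory GRing.Theory Num.Theory.
Local Open Scope ring_scope.

Section Defs.
Variable R : realType.
Implicit Types dummy : R.

Definition dens (X Y : finType) (Z : {set X * Y}) (A : {set X}) (B : {set Y}) : R :=
  #|Z :&: setX A B|%:R / (#|A|%:R * #|B|%:R).

Definition boxnorm4 (X Y : finType) (f : X -> Y -> R) (A : {set X}) (B : {set Y}) : R :=
  (#|A|%:R ^+ 2 * #|B|%:R ^+ 2)^-1 *
  \sum_(x in A) \sum_(x' in A) \sum_(y in B) \sum_(y' in B)
     f x y * f x y' * f x' y * f x' y'.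

Definition boxnorm (X Y : finType) (f : X -> Y -> R) (A : {set X}) (B : {set Y}) : R :=
  powR (boxnorm4 f A B) (4%:R^-1).

(* Z - P(Z : A x B), as a function (restricted to A x B in boxnorm) *)
Definition balanced (X Y : finType) (Z : {set X * Y}) (A : {set X}) (B : {set Y}) :
  X -> Y -> R := fun x y => ((x, y) \in Z)%:R - dens Z A B.

Definition condexp (T : finType) (Z : {set T}) (P : {set {set T}}) (z : T) : R :=
  \sum_(p in P) (z \in p)%:R * (#|Z :&: p|%:R / #|p|%:R).

Definition energy (T : finType) (Z : {set T}) (P : {set {set T}}) : R :=
  #|T|%:R^-1 * \sum_(z : T) condexp Z P z ^+ 2.

End Defs.

Definition prodpart (X Y : finType) (PX : {set {set X}}) (PY : {set {set Y}})
  : {set {set X * Y}} := [set setX a b | a in PX, b in PY].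

Definition refines (T : finType) (P' P : {set {set T}}) : Prop :=
  forall p, p \in P -> exists S : {set {set T}}, S \subset P' /\ p = cover S.

Definition multi (T : finType) (P' P : {set {set T}}) : nat :=
  \max_(p in P) #|[set p' in P' | p' \subset p]|.

Definition Eset (R : realType) (X Y : finType) (Z : {set X * Y})
  (PX : {set {set X}}) (PY : {set {set Y}}) (u : R) : {set {set X} * {set Y}} :=
  [set pq in setX PX PY | u <= boxnorm (balanced R Z pq.1 pq.2) pq.1 pq.2].

(* Main.v *)
Require Import Defs.
From HB Require Import structures.
From mathcomp Require Import all_boot all_order all_algebra.
From mathcomp Require Import reals exp Rstruct.
From mathcomp Require Import lra ring.
Import Order.TTheory GRing.Theory Num.Theory.
Local Open Scope ring_scope.

Set Implicit Arguments. Unset Strict Implicit. Unset Printing Implicit Defensive.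


Section Gen.
Variable R : realType.
Variable T : finType.

Definition exactc (P : {set {set T}}) := forall z, #|[set q in P | z \in q]| = 1%N.
Definition sat (P : {set {set T}}) (W : {set T}) :=
  forall q, q \in P -> forall z w, z \in q -> w \in q -> z \in W -> w \in W.

Lemma sum_indic (I : finType) (A : {pred I}) (p : pred I) :
  \sum_(i in A) ((p i)%:R : R) = #|[set i in A | p i]|%:R.
Proof.
rewrite -sum1_card natr_sum big_mkcond /= [RHS]big_mkcond /=; apply: eq_bigr => i _.
by rewrite inE; case: (i \in A); case: (p i).
Qed.

Lemma sum_ind (P : {set {set T}}) z : exactc P ->
  \sum_(q in P) ((z \in q)%:R : R) = 1.
Proof.
by move=> H; rewrite sum_indic H.
Qed.

Lemma exact_uniq (P : {set {set T}}) z q q' : exactc P -> q \in P -> q' \in P ->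
  z \in q -> z \in q' -> q = q'.
Proof.
move=> H qP q'P zq zq'; have := H z; move/eqP/cards1P=> [r Hr].
have : q \in [set r] by rewrite -Hr inE qP zq.
have : q' \in [set r] by rewrite -Hr inE q'P zq'.
by rewrite !inE => /eqP -> /eqP ->.
Qed.

Lemma condexp_block (Z : {set T}) P q z : exactc P -> q \in P -> z \in q ->
  condexp R Z P z = #|Z :&: q|%:R / #|q|%:R.
Proof.
move=> H qP zq; rewrite /condexp (bigD1 q) //= zq mul1r big1 ?addr0 //.
move=> q' /andP[q'P nq]; case zq': (z \in q'); last by rewrite mul0r.
by rewrite (exact_uniq H qP q'P zq zq') eqxx in nq.
Qed.

Lemma mul_dens (Z q : {set T}) : (#|q|%:R : R) * (#|Z :&: q|%:R / #|q|%:R) = #|Z :&: q|%:R.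
Proof.
have [q0|qn0] := eqVneq (#|q|%:R : R) 0.
  move/eqP: q0; rewrite pnatr_eq0 => /eqP q0.
  have : #|Z :&: q| = 0%N.
    by apply/eqP; rewrite -leqn0 -q0 subset_leq_card // subsetIr.
  by move=> ->; rewrite !mul0r mulr0.
by rewrite mulrCA divff // mulr1.
Qed.

Lemma sum_condexp_W (Z : {set T}) P W : exactc P -> sat P W ->
  \sum_(z in W) condexp R Z P z = #|Z :&: W|%:R.
Proof.
move=> H S.
have E1 : \sum_(z in W) condexp R Z P z =
   \sum_(q in P) (#|W :&: q|%:R * (#|Z :&: q|%:R / #|q|%:R)).
  rewrite /condexp exchange_big /=; apply: eq_bigr => q qP.
  rewrite -big_distrl /=; congr (_ * _).
  rewrite sum_indic; congr (_%:R); apply: eq_card => z; by rewrite !inE.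
have E2 : (#|Z :&: W|%:R : R) = \sum_(q in P) #|(Z :&: W) :&: q|%:R.
  rewrite -sum1_card natr_sum.
  under eq_bigr => z _ do rewrite -(sum_ind z H).
  rewrite exchange_big /=; apply: eq_bigr => q qP.
  rewrite sum_indic; congr (_%:R); apply: eq_card => z; by rewrite !inE andbC.
rewrite E1 E2; apply: eq_bigr => q qP.
have [sub|nsub] := boolP (q \subset W).
  rewrite (setIidPr sub) -setIA (setIidPr sub); exact: mul_dens.
have -> : W :&: q = set0.
  apply/setP => z; rewrite !inE; apply/negP => /andP[zW zq]; apply: (negP nsub).
  apply/subsetP => w wq; exact: (S q qP z w zq wq zW).
have -> : Z :&: W :&: q = set0.
  apply/setP => z; rewrite !inE; apply/negP => /andP[/andP[_ zW] zq]; apply: (negP nsub).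
  apply/subsetP => w wq; exact: (S q qP z w zq wq zW).
by rewrite cards0 !mul0r.
Qed.

Lemma sat_self P q : exactc P -> q \in P -> sat P q.
Proof.
move=> H qP q' q'P z w zq' wq' zq.
by rewrite (exact_uniq H qP q'P zq zq').
Qed.

Lemma cross_sum (Z : {set T}) P (g : T -> R) :
  \sum_z condexp R Z P z * g z = \sum_(q in P) (#|Z :&: q|%:R / #|q|%:R) * \sum_(z in q) g z.
Proof.
rewrite /condexp; under eq_bigr => z _ do rewrite big_distrl /=.
rewrite exchange_big /=; apply: eq_bigr => q qP.
rewrite big_distrr /= [RHS]big_mkcond /=; apply: eq_bigr => z _.
by case: (z \in q); rewrite ?mul1r ?mul0r ?mulr0 // mulrC.
Qed.

Lemma energy_diff (Z : {set T}) P P' : exactc P -> exactc P' ->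
  (forall q, q \in P -> sat P' q) ->
  \sum_z (condexp R Z P' z - condexp R Z P z) ^+ 2 =
  \sum_z condexp R Z P' z ^+ 2 - \sum_z condexp R Z P z ^+ 2.
Proof.
move=> H H' S.
have A1 : \sum_z condexp R Z P z * condexp R Z P' z =
          \sum_z condexp R Z P z * condexp R Z P z.
  rewrite !cross_sum; apply: eq_bigr => q qP.
  by rewrite (sum_condexp_W Z H' (S q qP)) (sum_condexp_W Z H (sat_self H qP)).
have -> : \sum_z (condexp R Z P' z - condexp R Z P z) ^+ 2 =
  \sum_z condexp R Z P' z ^+ 2 - 2 * \sum_z condexp R Z P z * condexp R Z P' z
   + \sum_z condexp R Z P z * condexp R Z P z.
  rewrite mulr_sumr -sumrB -big_split /=; apply: eq_bigr => z _; ring.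
have E2 : \sum_z condexp R Z P z * condexp R Z P z = \sum_z condexp R Z P z ^+ 2 by apply: eq_bigr => z _; rewrite expr2.
rewrite A1 E2.
ring.
Qed.

Lemma cs_sum (W : {set T}) (h : T -> R) :
  (\sum_(z in W) h z) ^+ 2 <= #|W|%:R * \sum_(z in W) h z ^+ 2.
Proof.
have [W0|Wn0] := eqVneq (#|W|%:R : R) 0.
  have : #|W| = 0%N by apply/eqP; rewrite -(pnatr_eq0 R) W0.
  move/eqP; rewrite cards_eq0 => /eqP ->; rewrite big_set0 cards0 mul0r expr0n /=; lra.
set s := \sum_(z in W) h z; set m := s / #|W|%:R.
have H0 : 0 <= \sum_(z in W) (h z - m) ^+ 2 by apply: sumr_ge0 => z _; apply: sqr_ge0.
have E : \sum_(z in W) (h z - m) ^+ 2 = \sum_(z in W) h z ^+ 2 - 2 * m * s + #|W|%:R * m ^+ 2.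
  rewrite /s mulr_sumr -sumrB -sum1_card natr_sum mulr_suml -big_split /=.
  apply: eq_bigr => z _; ring.
have hW : 0 < (#|W|%:R : R) by rewrite lt0r Wn0 ler0n.
have Em : #|W|%:R * m = s by rewrite /m mulrC divfK.
rewrite E in H0.
have : 0 <= #|W|%:R * (\sum_(z in W) h z ^+ 2 - 2 * m * s + #|W|%:R * m ^+ 2).
  by apply: mulr_ge0 => //; apply: ltW.
have -> : #|W|%:R * (\sum_(z in W) h z ^+ 2 - 2 * m * s + #|W|%:R * m ^+ 2)
  = #|W|%:R * \sum_(z in W) h z ^+ 2 - 2 * (#|W|%:R * m) * s + (#|W|%:R * m) ^+ 2 by ring.
rewrite Em; lra.
Qed.

End Gen.


Section Cut.
Variable R : realType.
Variables (X Y : finType) (Z : {set X * Y}).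

Lemma pair_ind (S : {set X}) (T : {set Y}) :
  \sum_(x in S) \sum_(y in T) (((x, y) \in Z)%:R : R) = #|Z :&: setX S T|%:R.
Proof.
rewrite pair_big /= -sum1_card natr_sum big_mkcond [RHS]big_mkcond /=.
apply: eq_bigr => [[x y]] _ /=; rewrite !inE /=.
by case: (x \in S); case: (y \in T); case: ((x, y) \in Z).
Qed.

Lemma restrict_sum (S A : {set X}) (F : X -> R) : S \subset A ->
  \sum_(x in A) (x \in S)%:R * F x = \sum_(x in S) F x.
Proof.
move=> sub; rewrite big_mkcond [RHS]big_mkcond /=; apply: eq_bigr => x _.
case xS: (x \in S); last by case: (x \in A); rewrite ?mul0r.
by rewrite (subsetP sub x xS) mul1r.
Qed.

Lemma restrict_sumY (S A : {set Y}) (F : Y -> R) : S \subset A ->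
  \sum_(x in A) (x \in S)%:R * F x = \sum_(x in S) F x.
Proof.
move=> sub; rewrite big_mkcond [RHS]big_mkcond /=; apply: eq_bigr => x _.
case xS: (x \in S); last by case: (x \in A); rewrite ?mul0r.
by rewrite (subsetP sub x xS) mul1r.
Qed.

Variables (A : {set X}) (B : {set Y}).
Let d := dens R Z A B.
Let f := balanced R Z A B.

Lemma rect_eq (S : {set X}) (T : {set Y}) : S \subset A -> T \subset B ->
  \sum_(x in A) \sum_(y in B) f x y * (x \in S)%:R * (y \in T)%:R =
  #|Z :&: setX S T|%:R - d * (#|S|%:R * #|T|%:R).
Proof.
move=> sA sB.
have -> : \sum_(x in A) \sum_(y in B) f x y * (x \in S)%:R * (y \in T)%:R =
   \sum_(x in A) (x \in S)%:R * \sum_(y in B) (y \in T)%:R * f x y.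
  apply: eq_bigr => x _; rewrite mulr_sumr; apply: eq_bigr => y _; ring.
rewrite restrict_sum //.
under eq_bigr => x _ do rewrite restrict_sumY //.
rewrite /f /balanced.
under eq_bigr => x _ do rewrite sumrB.
rewrite sumrB pair_ind -/d; congr (_ - _).
under eq_bigr => x _ do rewrite sumr_const.
by rewrite sumr_const -mulrnA -natrM mulr_natr mulnC.
Qed.


Lemma d_bounds : 0 <= d <= 1.
Proof.
rewrite /d /dens; have [n0|nn0] := eqVneq ((#|A|%:R : R) * #|B|%:R) 0.
  by rewrite n0 invr0 mulr0 lexx ler01.
have np : 0 < (#|A|%:R : R) * #|B|%:R.
  by rewrite lt0r nn0 mulr_ge0 ?ler0n.
apply/andP; split; first by apply: divr_ge0; rewrite ?ler0n ?mulr_ge0 ?ler0n.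
rewrite ler_pdivrMr // mul1r -natrM ler_nat -cardsX.
by apply: subset_leq_card; rewrite subsetIr.
Qed.

Lemma f_abs x y : `|f x y| <= 1.
Proof.
have := d_bounds; rewrite /f /balanced -/d => /andP[d0 d1].
by case: ((x, y) \in Z); rewrite /= ?mulr1n ?mulr0n ler_norml; lra.
Qed.

Lemma f_abs_eq x y : `|f x y| = ((x, y) \in Z)%:R + d - 2 * ((x, y) \in Z)%:R * d.
Proof.
have := d_bounds; rewrite /f /balanced -/d => /andP[d0 d1].
case: ((x, y) \in Z); rewrite /= ?mulr1n ?mulr0n.
  rewrite ger0_norm; lra.
rewrite ler0_norm; lra.
Qed.


Definition Mq := \sum_(x in A) \sum_(x' in A) \sum_(y in B) \sum_(y' in B)
     f x y * f x y' * f x' y * f x' y'.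
Definition Gq x' y' := \sum_(x in A) \sum_(y in B) f x y * f x y' * f x' y.

Lemma M_ge0 : 0 <= Mq.
Proof.
apply: sumr_ge0 => x _; apply: sumr_ge0 => x' _.
have -> : \sum_(y in B) \sum_(y' in B) f x y * f x y' * f x' y * f x' y' =
   (\sum_(y in B) f x y * f x' y) ^+ 2.
  rewrite expr2 big_distrlr /=; apply: eq_bigr => y _; apply: eq_bigr => y' _; ring.
exact: sqr_ge0.
Qed.

Lemma M_reorder : Mq = \sum_(x' in A) \sum_(y' in B) f x' y' * Gq x' y'.
Proof.
rewrite /Mq exchange_big /=; apply: eq_bigr => x' _.
under eq_bigr => x _ do rewrite exchange_big /=.
rewrite exchange_big /=; apply: eq_bigr => y' _.
rewrite /Gq big_distrr /=; apply: eq_bigr => x _.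
rewrite big_distrr /=; apply: eq_bigr => y _; ring.
Qed.

Lemma sum_const2 (c : R) : \sum_(x in A) \sum_(y in B) c = c * (#|A|%:R * #|B|%:R).
Proof.
under eq_bigr => x _ do rewrite sumr_const.
by rewrite sumr_const -mulrnA -natrM mulr_natr mulnC.
Qed.

Lemma lin4 (F1 F2 F3 F4 : X -> Y -> R) (c : R) :
  \sum_(x in A) \sum_(y in B) (F1 x y - c * F2 x y - c * F3 x y + c ^+ 2 * F4 x y) =
  \sum_(x in A) \sum_(y in B) F1 x y - c * \sum_(x in A) \sum_(y in B) F2 x y
  - c * \sum_(x in A) \sum_(y in B) F3 x y + c ^+ 2 * \sum_(x in A) \sum_(y in B) F4 x y.
Proof.
rewrite !mulr_sumr -!sumrB -big_split /=; apply: eq_bigr => x _.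
rewrite !mulr_sumr -!sumrB -big_split /=; apply: eq_bigr => y _.
by [].
Qed.

Lemma cut (u : R) : 0 < u -> u <= boxnorm f A B ->
  u ^+ 4 <= 2^-1 /\ exists (S : {set X}) (T : {set Y}), [/\ S \subset A, T \subset B &
   u ^+ 4 * (#|A|%:R * #|B|%:R) / 3 <= `|#|Z :&: setX S T|%:R - d * (#|S|%:R * #|T|%:R)| ].
Proof.
move=> u0 ub.
set nA : R := #|A|%:R; set nB : R := #|B|%:R.
have M0 := M_ge0.
have b4 : boxnorm4 f A B = (nA ^+ 2 * nB ^+ 2)^-1 * Mq by [].
have b40 : 0 <= boxnorm4 f A B.
  rewrite b4; apply: mulr_ge0 => //; rewrite invr_ge0; apply: mulr_ge0; apply: exprn_ge0; apply: ler0n.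
have u4 : u ^+ 4 <= boxnorm4 f A B.
  have : u ^+ 4 <= boxnorm f A B ^+ 4.
    by apply: lerXn2r => //; rewrite ?nnegrE ?(ltW u0) //; apply: powR_ge0.
  by rewrite /boxnorm -[X in _ <= X -> _]powR_mulrn ?powR_ge0 // -powRrM mulVf ?pnatr_eq0 // powRr1.
have u40 : 0 < u ^+ 4 by apply: exprn_gt0.
have nAp : (0 < #|A|)%N.
  rewrite lt0n; apply/negP => /eqP A0; move: u4; rewrite b4 /nA A0 expr0n /= mul0r invr0 mul0r.
  lra.
have nBp : (0 < #|B|)%N.
  rewrite lt0n; apply/negP => /eqP B0; move: u4; rewrite b4 /nB B0 expr0n /= mulr0 invr0 mul0r.
  lra.
have nA0 : 0 < nA by rewrite /nA ltr0n.
have nB0 : 0 < nB by rewrite /nB ltr0n.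
have n0 : 0 < nA * nB by apply: mulr_gt0.
have Mge : u ^+ 4 * (nA * nB) ^+ 2 <= Mq.
  have n2 : 0 < nA ^+ 2 * nB ^+ 2 by apply: mulr_gt0; apply: exprn_gt0.
  move: u4; rewrite b4 => u4.
  rewrite exprMn mulrC.
  have := ler_wpM2l (ltW n2) u4.
  by rewrite mulVKf ?lt0r_neq0.
have [dge0 dle1] : 0 <= d /\ d <= 1 by have := d_bounds; case/andP.
have kd : (#|Z :&: setX A B|%:R : R) = d * (nA * nB).
  by rewrite /d /dens -/nA -/nB divfK // lt0r_neq0.
have fsum : \sum_(x in A) \sum_(y in B) `|f x y| <= nA * nB / 2.
  have -> : \sum_(x in A) \sum_(y in B) `|f x y| =
      (1 - 2 * d) * \sum_(x in A) \sum_(y in B) (((x, y) \in Z)%:R : R)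
      + \sum_(x in A) \sum_(y in B) d.
    rewrite mulr_sumr -big_split /=; apply: eq_bigr => x _.
    rewrite mulr_sumr -big_split /=; apply: eq_bigr => y _.
    rewrite f_abs_eq; ring.
  rewrite pair_ind sum_const2 kd.
  have := mulr_ge0 (ltW n0) (sqr_ge0 (d - 2^-1)); set n := nA * nB; nra.
have Gb : forall x' y', `|Gq x' y'| <= nA * nB / 2.
  move=> x' y'; apply: le_trans fsum; rewrite /Gq.
  apply: le_trans (ler_norm_sum _ _ _) _; apply: ler_sum => x _.
  apply: le_trans (ler_norm_sum _ _ _) _; apply: ler_sum => y _.
  rewrite !normrM -[X in _ <= X]mulr1 -mulrA ler_wpM2l //.
  rewrite -[1]mulr1; apply: ler_pM => //; apply: f_abs.
have [x' [y' [x'A y'B Gx]]] : exists x' y', [/\ x' \in A, y' \in B &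
    u ^+ 4 * (nA * nB) <= `|Gq x' y'|].
  case: (boolP [exists x', exists y', (x' \in A) && (y' \in B) &&
                  (u ^+ 4 * (nA * nB) <= `|Gq x' y'|)]).
    move/existsP => [x' /existsP [y' /andP[/andP[H1 H2] H3]]].
    by exists x', y'.
  rewrite negb_exists => /forallP H.
  have Hlt : forall x' y', x' \in A -> y' \in B -> `|Gq x' y'| < u ^+ 4 * (nA * nB).
    move=> x' y' xa yb; have := H x'; rewrite negb_exists => /forallP /(_ y').
    by rewrite xa yb /= -ltNge.
  have /card_gt0P [a aA] := nAp.
  have /card_gt0P [b bB] := nBp.
  have : Mq < \sum_(x' in A) \sum_(y' in B) u ^+ 4 * (nA * nB).
    rewrite M_reorder; apply: le_lt_trans (ler_norm _) _.
    apply: le_lt_trans (ler_norm_sum _ _ _) _.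
    apply: ltr_sum; first by apply/hasP; exists a; rewrite ?mem_index_enum.
    move=> x1 x1A.
    apply: le_lt_trans (ler_norm_sum _ _ _) _.
    apply: ltr_sum; first by apply/hasP; exists b; rewrite ?mem_index_enum.
    move=> y1 y1B; rewrite normrM.
    apply: le_lt_trans (Hlt x1 y1 x1A y1B).
    rewrite -[X in _ <= X]mul1r ler_wpM2r //; exact: f_abs.
  rewrite sum_const2.
  set U := u ^+ 4 in Mge u40 *; set n := nA * nB in Mge n0 *. nra.
split.
  have := Gb x' y'; set U := u ^+ 4 in Gx u40 *; set n := nA * nB in Gx n0 *. nra.
set S0 := [set x in A | (x, y') \in Z]; set T0 := [set y in B | (x', y) \in Z].
have sS0 : S0 \subset A by apply/subsetP => x; rewrite inE => /andP[].
have sT0 : T0 \subset B by apply/subsetP => x; rewrite inE => /andP[].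
set R1 := \sum_(x in A) \sum_(y in B) f x y * (x \in S0)%:R * (y \in T0)%:R.
set R2 := \sum_(x in A) \sum_(y in B) f x y * (x \in S0)%:R * (y \in B)%:R.
set R3 := \sum_(x in A) \sum_(y in B) f x y * (x \in A)%:R * (y \in T0)%:R.
set R4 := \sum_(x in A) \sum_(y in B) f x y * (x \in A)%:R * (y \in B)%:R.
have GE : Gq x' y' = R1 - d * R2 - d * R3 + d ^+ 2 * R4.
  rewrite /R1 /R2 /R3 /R4 -lin4 /Gq; apply: eq_bigr => x xA; apply: eq_bigr => y yB.
  rewrite /f /balanced -/d !inE xA yB /=; ring.
have R40 : R4 = 0 by rewrite /R4 rect_eq // -kd subrr.
have Gle : `|Gq x' y'| <= `|R1| + `|R2| + `|R3|.
  rewrite GE R40 mulr0 addr0.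
  apply: le_trans (ler_normD _ _) _; apply: lerD; last first.
    by rewrite normrN normrM ger0_norm // -[X in _ <= X]mul1r ler_wpM2r.
  apply: le_trans (ler_normB _ _) _; apply: lerD => //.
  by rewrite normrM ger0_norm // -[X in _ <= X]mul1r ler_wpM2r.
have [H1|H1] := lerP (u ^+ 4 * (nA * nB) / 3) `|R1|.
  by exists S0, T0; split => //; rewrite -rect_eq.
have [H2|H2] := lerP (u ^+ 4 * (nA * nB) / 3) `|R2|.
  by exists S0, B; split => //; rewrite -rect_eq.
exists A, T0; split => //; rewrite -rect_eq // -/R3.
set U := u ^+ 4 * (nA * nB) in Gx H1 H2 *; lra.
Qed.

End Cut.


Lemma preim_same (T : finType) (rT : eqType) (f : T -> rT) (D : {set T}) q x y :
  q \in preim_partition f D -> x \in q -> y \in q -> f x = f y.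
Proof.
rewrite /preim_partition /equivalence_partition => /imsetP [x0 _ ->].
by rewrite !inE => /andP[_ /eqP h1] /andP[_ /eqP h2]; rewrite -h1 -h2.
Qed.

Lemma preim_eq (T : finType) (rT : eqType) (f : T -> rT) (D : {set T}) q x :
  q \in preim_partition f D -> x \in q -> q = [set y in D | f x == f y].
Proof.
rewrite /preim_partition /equivalence_partition => /imsetP [x0 _ ->].
rewrite inE => /andP[_ /eqP h]; apply/setP => y; by rewrite !inE h.
Qed.

Section Prod.
Variable R : realType.
Variables (X Y : finType).

Lemma exact_prod (PX : {set {set X}}) (PY : {set {set Y}}) :
  partition PX [set: X] -> partition PY [set: Y] -> exactc (prodpart PX PY).
Proof.
move=> pX pY z.
have [/eqP cX tX _] := and3P pX; have [/eqP cY tY _] := and3P pY.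
suff -> : [set q in prodpart PX PY | z \in q] = [set setX (pblock PX z.1) (pblock PY z.2)].
  by rewrite cards1.
apply/setP => q; rewrite !inE; apply/andP/eqP.
  move=> [/imset2P [a b aP bP ->]]; rewrite inE => /andP[za zb].
  by rewrite (def_pblock tX aP za) (def_pblock tY bP zb).
move=> ->; split.
  by apply: imset2_f; rewrite pblock_mem // ?cX ?cY inE.
by rewrite inE !mem_pblock cX cY !inE.
Qed.

Lemma cells_sum (PX : {set {set X}}) (PY : {set {set Y}}) (h : X * Y -> R) :
  partition PX [set: X] -> partition PY [set: Y] ->
  \sum_z h z = \sum_(c in setX PX PY) \sum_(z in setX c.1 c.2) h z.
Proof.
move=> pX pY.
have [/eqP cX tX _] := and3P pX; have [/eqP cY tY _] := and3P pY.
have one : forall z, \sum_(c in setX PX PY) ((z \in setX c.1 c.2)%:R : R) = 1.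
  move=> z; rewrite sum_indic.
  suff -> : [set c in setX PX PY | z \in setX c.1 c.2] = [set (pblock PX z.1, pblock PY z.2)].
    by rewrite cards1.
  apply/setP => c; rewrite !inE; apply/andP/eqP.
    case: c => a b /= [/andP[aP bP] /andP[za zb]].
    by rewrite (def_pblock tX aP za) (def_pblock tY bP zb).
  move=> -> /=; rewrite !pblock_mem ?cX ?cY ?inE //.
  by rewrite !mem_pblock cX cY !inE.
transitivity (\sum_z (\sum_(c in setX PX PY) ((z \in setX c.1 c.2)%:R : R)) * h z).
  by apply: eq_bigr => z _; rewrite one mul1r.
under eq_bigr => z _ do rewrite big_distrl /=.
rewrite exchange_big /=; apply: eq_bigr => c _.
rewrite [RHS]big_mkcond /=; apply: eq_bigr => z _.
by case: (z \in setX c.1 c.2); rewrite ?mul1r ?mul0r.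
Qed.

Lemma card_union_le (E : {set {set X} * {set Y}}) :
  (#|\bigcup_(c in E) setX c.1 c.2|%:R : R) <= \sum_(c in E) (#|c.1|%:R * #|c.2|%:R).
Proof.
have -> : \sum_(c in E) ((#|c.1|%:R : R) * #|c.2|%:R) =
          \sum_(c in E) \sum_z ((z \in setX c.1 c.2)%:R : R).
  apply: eq_bigr => c _; rewrite sum_indic -natrM -cardsX; congr (_%:R).
  by apply: eq_card => z; rewrite !inE.
rewrite exchange_big /= -sum1_card natr_sum.
apply: (@le_trans _ _ (\sum_(z in \bigcup_(c in E) setX c.1 c.2)
           \sum_(c in E) ((z \in setX c.1 c.2)%:R : R))).
  apply: ler_sum => z /bigcupP [c cE zc].
  rewrite (bigD1 c) //= zc lerDl; apply: sumr_ge0 => c' _; apply: ler0n.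
rewrite [X in X <= _]big_mkcond /=; apply: ler_sum => z _.
case: (z \in _) => //; apply: sumr_ge0 => c' _; apply: ler0n.
Qed.

End Prod.


Lemma sat_prod (X Y : finType) (PX : {set {set X}}) (PY : {set {set Y}}) S T :
  sat PX S -> sat PY T -> sat (prodpart PX PY) (setX S T).
Proof.
move=> hS hT q /imset2P[a b aP bP ->] z w; rewrite !inE.
move=> /andP[za zb] /andP[wa wb] /andP[zS zT].
by rewrite (hS a aP _ _ za wa zS) (hT b bP _ _ zb wb zT).
Qed.

Section Refine.
Variables (T K : finType) (P : {set {set T}}) (I : {set K}).
Variable F : {set T} -> K -> {set T}.
Hypothesis pP : partition P [set: T].
Hypothesis Fsub : forall a k, F a k \subset a.

Definition sigr x := (pblock P x, [set k in I | x \in F (pblock P x) k]).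
Definition Pr := preim_partition sigr [set: T].

Lemma Pr_part : partition Pr [set: T].
Proof. exact: preim_partitionP. Qed.

Lemma sat_block a : a \in P -> sat Pr a.
Proof.
have [/eqP cP tP _] := and3P pP.
move=> aP q qP x1 x2 x1q x2q x1a.
have e := congr1 fst (preim_same qP x1q x2q); rewrite /= (def_pblock tP aP x1a) in e.
by rewrite e mem_pblock cP inE.
Qed.

Lemma sat_F a k : a \in P -> k \in I -> sat Pr (F a k).
Proof.
have [/eqP cP tP _] := and3P pP.
move=> aP kI q qP x1 x2 x1q x2q x1s.
have e := preim_same qP x1q x2q.
have x1a : x1 \in a := subsetP (Fsub a k) x1 x1s.
have pb1 : pblock P x1 = a := def_pblock tP aP x1a.
have : k \in (sigr x1).2 by rewrite /sigr inE kI pb1 x1s.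
have pb2 : pblock P x2 = a by have := congr1 fst e; rewrite /= pb1.
by rewrite e /sigr /= inE pb2 => /andP[_].
Qed.

Lemma pick_some (p : {set T}) : p != set0 -> exists x, x \in p /\ [pick x in p] = Some x.
Proof.
case: pickP => [x hx|H] pn; first by exists x.
by case/negP: pn; apply/eqP/setP => x; rewrite inE H.
Qed.

Lemma multi_le : (multi Pr P <= 2 ^ #|I|)%N.
Proof.
have [/eqP cP tP _] := and3P pP.
have [_ _ n0] := and3P Pr_part.
rewrite /multi; apply/bigmax_leqP => p pP' /=.
set Q := [set p' in Pr | p' \subset p].
pose g (p' : {set T}) := odflt set0 (omap (fun x => (sigr x).2) [pick x in p']).
have Qne : forall p', p' \in Q -> exists x, [/\ x \in p', x \in p & g p' = (sigr x).2].
  move=> p'; rewrite inE => /andP[p'P sub].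
  have : p' != set0 by apply: contraNneq n0 => <-.
  move=> /pick_some [x [xp' hx]]; exists x; split => //; first exact: (subsetP sub).
  by rewrite /g hx.
have ginj : {in Q &, injective g}.
  move=> p1 p2 p1Q p2Q eg.
  have [x1 [x1p1 x1p e1]] := Qne p1 p1Q.
  have [x2 [x2p2 x2p e2]] := Qne p2 p2Q.
  have es : sigr x1 = sigr x2.
    rewrite /sigr (def_pblock tP pP' x1p) (def_pblock tP pP' x2p).
    congr pair; move: eg; rewrite e1 e2 /sigr (def_pblock tP pP' x1p) (def_pblock tP pP' x2p).
    by [].
  move: p1Q p2Q; rewrite !inE => /andP[p1P _] /andP[p2P _].
  by rewrite (preim_eq p1P x1p1) (preim_eq p2P x2p2) es.
rewrite -(card_in_imset ginj) -card_powerset; apply: subset_leq_card.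
apply/subsetP => s /imsetP [p' p'Q ->]; rewrite powersetE.
have [x [_ _ ->]] := Qne p' p'Q.
by apply/subsetP => k; rewrite inE => /andP[].
Qed.

End Refine.


Lemma refines_prod (X Y : finType) (PX PX' : {set {set X}}) (PY PY' : {set {set Y}}) :
  partition PX' [set: X] -> partition PY' [set: Y] ->
  (forall a, a \in PX -> sat PX' a) -> (forall b, b \in PY -> sat PY' b) ->
  refines (prodpart PX' PY') (prodpart PX PY).
Proof.
move=> pX' pY' sX sY p /imset2P [a b aP bP ->].
have [/eqP cX _ _] := and3P pX'; have [/eqP cY _ _] := and3P pY'.
exists [set q in prodpart PX' PY' | q \subset setX a b]; split.
  by apply/subsetP => q; rewrite inE => /andP[].
apply/setP => z; apply/idP/bigcupP.
  move=> zab; exists (setX (pblock PX' z.1) (pblock PY' z.2)).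
    have qP : setX (pblock PX' z.1) (pblock PY' z.2) \in prodpart PX' PY'.
      by apply: imset2_f; rewrite pblock_mem // ?cX ?cY inE.
    rewrite inE qP /=; apply/subsetP => w wq.
    apply: (@sat_prod _ _ PX' PY' a b (sX a aP) (sY b bP) _ qP z w) => //.
    by rewrite inE !mem_pblock cX cY !inE.
  by rewrite inE !mem_pblock cX cY !inE.
by move=> [q]; rewrite inE => /andP[_ /subsetP sub] /sub.
Qed.

Lemma sub_sum_le (R : realType) (T : finType) (A B : {set T}) (h : T -> R) :
  B \subset A -> (forall z, 0 <= h z) -> \sum_(z in B) h z <= \sum_(z in A) h z.
Proof.
move=> sub h0; rewrite big_mkcond [X in _ <= X]big_mkcond /=; apply: ler_sum => z _.
case zB: (z \in B); first by rewrite (subsetP sub z zB).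
by case: (z \in A).
Qed.

Lemma final_ineq (R : realType) (v n w s dl : R) :
  0 < v -> v <= 2^-1 -> 0 <= n -> 0 <= w -> w <= n -> 0 <= s ->
  dl ^+ 2 <= w * s -> v * n / 3 <= `|dl| -> v ^+ 6 * n <= s.
Proof.
move=> v0 vh n0 w0 wn s0 hs hd.
have vn0 : 0 <= v * n / 3 by apply: divr_ge0 => //; apply: mulr_ge0 => //; apply: ltW.
have d2 : (v * n / 3) ^+ 2 <= dl ^+ 2.
  by rewrite -[dl ^+ 2]ger0_norm ?sqr_ge0 // normrX; apply: lerXn2r; rewrite ?nnegrE.
have [n00|np] := eqVneq n 0; first by rewrite n00 mulr0.
have npos : 0 < n by rewrite lt0r np.
have h1 : (v * n / 3) ^+ 2 <= n * s.
  apply: le_trans d2 _; apply: le_trans hs _; exact: ler_wpM2r.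
have h2 : v ^+ 2 * n / 9 <= s.
  have e : (v * n / 3) ^+ 2 = n * (v ^+ 2 * n / 9) by field.
  rewrite e in h1; by rewrite -(ler_pM2l npos).
have v4 : v ^+ 4 <= 16^-1.
  have : v ^+ 4 <= (2^-1) ^+ 4 by apply: lerXn2r; rewrite // nnegrE; lra.
  by have -> : (2^-1 : R) ^+ 4 = 16^-1 by field.
apply: le_trans h2.
have -> : v ^+ 6 * n = v ^+ 2 * n * v ^+ 4 by ring.
apply: ler_wpM2l; first by rewrite mulr_ge0 ?sqr_ge0.
apply: le_trans v4 _; rewrite lef_pV2 ?posrE //; lra.
Qed.

Unset Implicit Arguments.


Theorem proposition9p14 :
  exists C2 : Rdefinitions.R, 0 < C2 /\
  forall (u tau : Rdefinitions.R), 0 < u < 1 -> 0 < tau < 1 ->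
  forall (X Y : finType) (Z : {set X * Y})
         (PX : {set {set X}}) (PY : {set {set Y}}),
  partition PX [set: X] -> partition PY [set: Y] ->
  tau <= #|\bigcup_(pq in Eset Z PX PY u) setX pq.1 pq.2|%:R
           / (#|X|%:R * #|Y|%:R) ->
  exists (PX' : {set {set X}}) (PY' : {set {set Y}}),
    [/\ partition PX' [set: X], partition PY' [set: Y],
        (refines (prodpart PX' PY') (prodpart PX PY) /\
        energy Rdefinitions.R Z (prodpart PX PY) + tau * powR u C2
          <= energy Rdefinitions.R Z (prodpart PX' PY')),
        (multi PX' PX <= 2 ^ #|PY|)%N &
        (multi PY' PY <= 2 ^ #|PX|)%N].
Proof.
exists 24%:R; split; first by rewrite ltr0n.
move=> u tau /andP[u0 u1] /andP[t0 t1] X Y Z PX PY pX pY Htau.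
pose stp (a : {set X}) (b : {set Y}) (s : {set X} * {set Y}) :=
  [&& s.1 \subset a, s.2 \subset b &
      u ^+ 4 * (#|a|%:R * #|b|%:R) / 3 <=
      `|#|Z :&: setX s.1 s.2|%:R - dens Rdefinitions.R Z a b * (#|s.1|%:R * #|s.2|%:R)|].
pose st a b := odflt (set0, set0) [pick s | stp a b s].
have st_sub : forall a b, (st a b).1 \subset a /\ (st a b).2 \subset b.
  move=> a b; rewrite /st; case: pickP => [s /and3P[h1 h2 _] | _] //=.
  by split; apply: sub0set.
have st_spec : forall a b, u <= boxnorm (balanced Rdefinitions.R Z a b) a b ->
    stp a b (st a b) /\ u ^+ 4 <= 2^-1.
  move=> a b ub; have [uh [S [T [h1 h2 h3]]]] := cut u0 ub.
  split => //; rewrite /st; case: pickP => [s hs | H] //=.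
  by have := H (S, T); rewrite /stp /= h1 h2 h3.
pose FX a b := (st a b).1.
pose FY b a := (st a b).2.
have FXs : forall a b, FX a b \subset a by move=> a b; case: (st_sub a b).
have FYs : forall b a, FY b a \subset b by move=> b a; case: (st_sub a b).
set PX' := Pr PX PY FX; set PY' := Pr PY PX FY.
have pX' : partition PX' [set: X] by apply: Pr_part.
have pY' : partition PY' [set: Y] by apply: Pr_part.
have sbX : forall a, a \in PX -> sat PX' a by move=> a aP; apply: sat_block.
have sbY : forall b, b \in PY -> sat PY' b by move=> b bP; apply: sat_block.
exists PX', PY'; split => //; last first.
- exact: multi_le.
- exact: multi_le.
split; first exact: refines_prod.
set E := Eset Z PX PY u in Htau *.
set c0 := condexp Rdefinitions.R Z (prodpart PX PY).
set c1 := condexp Rdefinitions.R Z (prodpart PX' PY').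
have hex0 := exact_prod pX pY.
have hex1 := exact_prod pX' pY'.
have hsat : forall q, q \in prodpart PX PY -> sat (prodpart PX' PY') q.
  by move=> q /imset2P [a b aP bP ->]; apply: sat_prod; [apply: sbX | apply: sbY].
have HD := energy_diff Rdefinitions.R Z hex0 hex1 hsat.
set N : Rdefinitions.R := #|X|%:R * #|Y|%:R in Htau.
set U := \bigcup_(pq in E) setX pq.1 pq.2 in Htau.
have Np : 0 < N.
  rewrite lt0r mulr_ge0 ?ler0n // andbT; apply/negP => /eqP N0.
  by move: Htau; rewrite N0 invr0 mulr0; lra.
have hE : forall c, c \in E -> (u ^+ 24 : Rdefinitions.R) * (#|c.1|%:R * #|c.2|%:R) <=
                         \sum_(z in setX c.1 c.2) (c1 z - c0 z) ^+ 2.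
  case=> a b; rewrite !inE /= => /andP[/andP[aP bP] ub].
  have [hst uh] := st_spec a b ub.
  move: hst; rewrite /stp => /and3P[sS sT hd].
  set S := (st a b).1 in sS sT hd *; set T := (st a b).2 in sS sT hd *.
  have cellP : setX a b \in prodpart PX PY by apply: imset2_f.
  have sW : setX S T \subset setX a b.
    by apply/subsetP => z; rewrite !inE => /andP[zS zT]; rewrite (subsetP sS _ zS) (subsetP sT _ zT).
  apply: (le_trans _ (sub_sum_le (h := fun z => (c1 z - c0 z) ^+ 2) sW (fun z => sqr_ge0 _))).
  have satW : sat (prodpart PX' PY') (setX S T).
    by apply: sat_prod; [apply: (sat_F pX FXs aP bP) | apply: (sat_F pY FYs bP aP)].
  have s1 : \sum_(z in setX S T) c1 z = #|Z :&: setX S T|%:R.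
    exact: sum_condexp_W hex1 satW.
  have s0 : \sum_(z in setX S T) c0 z = dens Rdefinitions.R Z a b * (#|S|%:R * #|T|%:R).
    rewrite (eq_bigr (fun _ => dens Rdefinitions.R Z a b)); last first.
      move=> z zW; rewrite /c0 (condexp_block Rdefinitions.R Z hex0 cellP (subsetP sW z zW)).
      by rewrite /dens -natrM -cardsX.
    by rewrite sumr_const -natrM -cardsX mulr_natr.
  have hcs := cs_sum (setX S T) (fun z => c1 z - c0 z).
  rewrite sumrB s1 s0 in hcs.
  have wn : (#|setX S T|%:R : Rdefinitions.R) <= #|a|%:R * #|b|%:R.
    by rewrite -natrM ler_nat -cardsX; apply: subset_leq_card.
  have := final_ineq (exprn_gt0 4 u0) uh (mulr_ge0 (ler0n _ _) (ler0n _ _)) (ler0n _ _) wn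
     (sumr_ge0 _ (fun z _ => sqr_ge0 (c1 z - c0 z))) hcs hd.
  by rewrite -exprM.
have ES : E \subset setX PX PY by apply/subsetP => c; rewrite inE => /andP[].
have tN : tau * N <= #|U|%:R by move: Htau; rewrite ler_pdivlMr.
have Dge : u ^+ 24 * (tau * N) <= \sum_z (c1 z - c0 z) ^+ 2.
  rewrite (cells_sum (fun z => (c1 z - c0 z) ^+ 2) pX pY).
  rewrite (big_setID E) /= (setIidPr ES).
  apply: le_trans (_ : _ <= \sum_(c in E) \sum_(z in setX c.1 c.2) (c1 z - c0 z) ^+ 2) _; last first.
    rewrite lerDl; apply: sumr_ge0 => c _; apply: sumr_ge0 => z _; apply: sqr_ge0.
  apply: le_trans (ler_sum _ hE).
  rewrite -mulr_sumr; apply: ler_wpM2l; first by apply: exprn_ge0; apply: ltW.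
  apply: le_trans tN _; exact: card_union_le.
rewrite /energy card_prod natrM -/N powR_mulrn; last exact: ltW.
rewrite -/c0 -/c1.
set s0 := \sum_z c0 z ^+ 2 in HD *; set s1 := \sum_z c1 z ^+ 2 in HD *.
rewrite HD in Dge.
rewrite -subr_ge0.
have -> : N^-1 * s1 - (N^-1 * s0 + tau * u ^+ 24) = N^-1 * (s1 - s0 - u ^+ 24 * (tau * N)).
  by field; apply: lt0r_neq0.
apply: mulr_ge0; first by rewrite invr_ge0 ltW.
by rewrite subr_ge0.
Qed.
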